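(* Let $\Gamma$ be a quantum graph with an action of a finite group $K$ (no element mapping a vertex to an adjacent vertex) and let $R$ be a finite-dimensional complex representation of $K$. Then any two quantum graphs $\Gamma/R$ obtained by the recipe below, with possibly different choices of global basis, orbit representatives and edge bases, are transplantable.
   Context: Quantum graphs. A quantum graph $\Gamma$ has a finite vertex set $V$ and finite edge set $E$; each edge $e$ has length $l_e>0$ and a coordinate identifying it with $[0,l_e]$. Functions are tuples $f=(f|_e)$, $f|_e\in W^{2,2}([0,l_e])$. At a vertex $v$ of degree $d_v$ the conditions are $A_vf|_v+B_vf'|_v=0$, where $A_v,B_v$ are complex matrices with $d_v$ columns indexed by the incident edges, $f|_v$ is the vector of values at $v$ and $f'|_v$ the vector of outgoing derivatives at $v$. $\Phi_\Gamma(\lambda)$ denotes the space of functions satisfying all vertex conditions with $-f''=\lambda f$ on each edge. Transplantation. Quantum graphs $\Gamma_1,\Gamma_2$ are transplantable if there is a complex matrix $T=(T_{e,e'})_{e\in E(\Gamma_2),\,e'\in E(\Gamma_1)}$ with $T_{e,e'}=0$ whenever $l_e\ne l_{e'}$ such that for every $\lambda\in\mathbb{C}$ the map $f\mapsto\varphi$, $\varphi|_e=\sum_{e'}T_{e,e'}f|_{e'}$ (as functions on $[0,l_e]$ in the edge coordinates), is a linear bijection $\Phi_{\Gamma_1}(\lambda)\to\Phi_{\Gamma_2}(\lambda)$. Setting. $K$ is a finite group acting on $\Gamma$ (permuting vertices and edges, preserving incidence and lengths, mapping edges isometrically, preserving vertex conditions), acting on functions by $(gf)(x)=f(g^{-1}x)$;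 assume no element of $K$ maps a vertex to a vertex adjacent to it. $K_x$ denotes the stabilizer of a vertex or edge $x$. $R$ is a $d$-dimensional complex representation of $K$ with homomorphism $\rho_R:K\to GL(V^R)$. For bases $C=(c_1,\dots,c_d)$, $C'$ of $V^R$ and linear $T$, $[T]^{C}_{C'}$ is the matrix whose $j$-th column is the $C'$-coordinate vector of $T(c_j)$. Recipe for $\Gamma/R$. Choose: a global basis $B$ of $V^R$; representatives $\tilde e^1,\dots,\tilde e^I$ of the $K$-orbits on $E$ and $\tilde v_1,\dots,\tilde v_N$ of the $K$-orbits on $V$; for each $i$ a basis $B^i=(b^i_1,\dots,b^i_d)$ of $V^R$ such that $b^i_1,\dots,b^i_{d_i}$ is a basis of the subspace of vectors fixed by $\rho_R(K_{\tilde e^i})$ and $b^i_{d_i+1},\dots,b^i_d$ is a basis of the sum of the nontrivial isotypic components of $R$ restricted to $K_{\tilde e^i}$. The quotient has vertices $v_1,\dots,v_N$ and edges $e^i_j$ ($1\le i\le I$, $1\le j\le d_i$), $e^i_j$ of length $l_{\tilde e^i}$ with the coordinate of $\tilde e^i$; if $\tilde e^i$ joins a vertex of the orbit of $\tilde v_k$ to one of the orbit of $\tilde v_{k'}$, then each $e^i_j$ joins $v_k$ to $v_{k'}$, endpoints corresponding. Vertex conditions at $v_k$: write the edges at $\tilde v_k$ as $g_1\tilde e^{\nu_1},\dots,g_n\tilde e^{\nu_n}$ ($g_l\in K$, $n=d_{\tilde v_k}$) and let $A_{\tilde v_k},B_{\tilde v_k}$ be its condition matrices with columns in this order; let $\mu_1,\dots,\mu_m$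 be the distinct values among the $\nu_l$; let $\Theta'$ be the $n\times m$ matrix with $\Theta'_{l,l'}=1$ if $\nu_l=\mu_{l'}$ and $0$ otherwise; let $\Theta$ be obtained from $\Theta'\otimes I_d$ by deleting the columns $(l'-1)d+j$ with $d_{\mu_{l'}}<j\le d$ (the remaining columns, indexed by $(l',j)$ with $j\le d_{\mu_{l'}}$, correspond to the edges $e^{\mu_{l'}}_j$ at $v_k$). With $D=\mathrm{diag}\big(([\rho_R(g_1^{-1})]^{B}_{B^{\nu_1}})^T,\dots,([\rho_R(g_n^{-1})]^{B}_{B^{\nu_n}})^T\big)$, set $A_{v_k}=(A_{\tilde v_k}\otimes I_d)D\Theta$, $B_{v_k}=(B_{\tilde v_k}\otimes I_d)D\Theta$ (possibly non-square); the conditions at $v_k$ are $A_{v_k}f|_{v_k}+B_{v_k}f'|_{v_k}=0$. *)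

(* Defs.v *)
From Stdlib Require Import Reals.
From HB Require Import structures.
From mathcomp Require Import all_boot fingroup.

Set Implicit Arguments.
Unset Strict Implicit.
Unset Printing Implicit Defensive.

Record C := mkC { Re : R ; Im : R }.

Definition C0 : C := mkC R0 R0.
Definition C1 : C := mkC R1 R0.
Definition Cadd (z w : C) : C := mkC (Rplus (Re z) (Re w)) (Rplus (Im z) (Im w)).
Definition Copp (z : C) : C := mkC (Ropp (Re z)) (Ropp (Im z)).
Definition Csub (z w : C) : C := Cadd z (Copp w).
Definition Cmul (z w : C) : C :=
  mkC (Rminus (Rmult (Re z) (Re w)) (Rmult (Im z) (Im w)))
      (Rplus (Rmult (Re z) (Im w)) (Rmult (Im z) (Re w))).
Definition CscaleR (r : R) (z : C) : C := mkC (Rmult r (Re z)) (Rmult r (Im z)).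
Definition Cmod (z : C) : R := sqrt (Rplus (Rsqr (Re z)) (Rsqr (Im z))).

Definition Csum (T : finType) (P : pred T) (F : T -> C) : C :=
  \big[Cadd/C0]_(x | P x) F x.

Definition has_deriv_within (a b : R) (f : R -> C) (x : R) (df : C) : Prop :=
  forall eps : R, Rlt R0 eps ->
  exists delta : R, Rlt R0 delta /\
    forall h : R, h <> R0 -> Rlt (Rabs h) delta ->
      Rle a (Rplus x h) -> Rle (Rplus x h) b ->
      Rlt (Cmod (Csub (CscaleR (Rinv h) (Csub (f (Rplus x h)) (f x))) df)) eps.

(* Edge e has coordinate [0, qlen e]; coordinate 0 sits at qsrc e and        *)
(* coordinate qlen e at qtgt e.  An "end" of an edge is a pair (e, s) with   *)
(* s = false the 0-end and s = true the qlen-end.  The vertex conditions at  *)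
(* v are matrices qA v, qB v with rows indexed by the finite type qRow v and *)
(* columns indexed by the edge ends incident to v (entries for ends not      *)
(* incident to v are ignored).                                               *)
Record qgraph := QGraph {
  qV : finType ;
  qE : finType ;
  qsrc : qE -> qV ;
  qtgt : qE -> qV ;
  qlen : qE -> R ;
  qlen_pos : forall e, Rlt R0 (qlen e) ;
  qRow : qV -> finType ;
  qA : forall v, qRow v -> qE -> bool -> C ;
  qB : forall v, qRow v -> qE -> bool -> C }.

Definition endpt (G : qgraph) (e : qE G) (s : bool) : qV G :=
  if s then qtgt e else qsrc e.

(* The boundary data (a = values, b = outgoing derivatives, both indexed by
   edge ends) satisfy the vertex conditions at v: A_v a|_v + B_v b|_v = 0. *)
Definition sat_at (G : qgraph) (v : qV G) (a b : qE G -> bool -> C) : Prop :=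
  forall r : qRow v,
    Csum (fun es : (qE G * bool)%type => endpt es.1 es.2 == v)
         (fun es => Cadd (Cmul (qA r es.1 es.2) (a es.1 es.2))
                         (Cmul (qB r es.1 es.2) (b es.1 es.2))) = C0.

(* functions on the graph: one complex function per edge, considered on
   [0, qlen e] in the edge coordinate *)
Definition gfun (G : qgraph) := qE G -> R -> C.

Definition in_edge (G : qgraph) (e : qE G) (x : R) : Prop :=
  Rle R0 x /\ Rle x (qlen e).

Definition bval (G : qgraph) (F : gfun G) (e : qE G) (s : bool) : C :=
  if s then F e (qlen e) else F e R0.
(* outgoing derivative at the end (e,s), given the derivative F' *)
Definition dval (G : qgraph) (F' : gfun G) (e : qE G) (s : bool) : C :=
  if s then Copp (F' e (qlen e)) else F' e R0.

Definition Phi (G : qgraph) (lam : C) (F : gfun G) : Prop :=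
  exists F' F'' : gfun G,
    (forall e x, in_edge e x ->
       has_deriv_within R0 (qlen e) (F e) x (F' e x) /\
       has_deriv_within R0 (qlen e) (F' e) x (F'' e x) /\
       F'' e x = Copp (Cmul lam (F e x))) /\
    (forall v : qV G, sat_at v (bval F) (dval F')).

Arguments Phi G lam F : clear implicits.

Definition feq (G : qgraph) (F1 F2 : gfun G) : Prop :=
  forall e x, in_edge e x -> F1 e x = F2 e x.

Definition transplant (G1 G2 : qgraph) (T : qE G2 -> qE G1 -> C) (F : gfun G1)
  : gfun G2 :=
  fun e x => Csum predT (fun e' => Cmul (T e e') (F e' x)).

Definition transplantable (G1 G2 : qgraph) : Prop :=
  exists T : qE G2 -> qE G1 -> C,
    (forall e e', qlen e <> qlen e' -> T e e' = C0) /\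
    forall lam : C,
      (forall F, Phi G1 lam F -> Phi G2 lam (transplant T F)) /\
      (forall F1 F2, Phi G1 lam F1 -> Phi G1 lam F2 ->
         feq (transplant T F1) (transplant T F2) -> feq F1 F2) /\
      (forall P, Phi G2 lam P -> exists F, Phi G1 lam F /\ feq (transplant T F) P).

Definition is_qaction (G : qgraph) (K : finGroupType)
    (aV : K -> qV G -> qV G) (aE : K -> qE G -> qE G) : Prop :=
  (forall v, aV 1%g v = v) /\ (forall g h v, aV (g * h)%g v = aV g (aV h v)) /\
  (forall e, aE 1%g e = e) /\ (forall g h e, aE (g * h)%g e = aE g (aE h e)) /\
  (* incidence (and edge coordinates) preserved *)
  (forall g e, qsrc (aE g e) = aV g (qsrc e)) /\
  (forall g e, qtgt (aE g e) = aV g (qtgt e)) /\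
  (forall g e, qlen (aE g e) = qlen e) /\
  (forall g v (a b : qE G -> bool -> C),
     sat_at v a b <->
     sat_at (aV g v) (fun e s => a (aE (g^-1)%g e) s) (fun e s => b (aE (g^-1)%g e) s)).

Definition no_adjacent_map (G : qgraph) (K : finGroupType) (aV : K -> qV G -> qV G) :=
  forall (g : K) (e : qE G), aV g (qsrc e) <> qtgt e /\ aV g (qtgt e) <> qsrc e.

Definition vec (d : nat) := 'I_d -> C.
Definition mat (d : nat) := 'I_d -> 'I_d -> C.

Definition mxv (d : nat) (M : mat d) (v : vec d) : vec d :=
  fun i => Csum predT (fun j => Cmul (M i j) (v j)).

Definition vzero (d : nat) : vec d := fun _ => C0.
Definition vadd (d : nat) (u v : vec d) : vec d := fun i => Cadd (u i) (v i).
Definition vscale (d : nat) (c : C) (v : vec d) : vec d := fun i => Cmul c (v i).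

Definition lincomb (d m : nat) (J : pred 'I_m) (c : 'I_m -> C) (b : 'I_m -> vec d)
  : vec d := fun i => Csum J (fun j => Cmul (c j) (b j i)).

Definition is_rep (K : finGroupType) (d : nat) (rho : K -> mat d) : Prop :=
  (forall i j, rho 1%g i j = if i == j then C1 else C0) /\
  (forall g h i k, rho (g * h)%g i k = Csum predT (fun j => Cmul (rho g i j) (rho h j k))).

Definition is_subspace (d : nat) (P : vec d -> Prop) : Prop :=
  P (@vzero d) /\ (forall u v, P u -> P v -> P (vadd u v)) /\
  (forall c v, P v -> P (vscale c v)).

Section RepDefs.
Variables (K : finGroupType) (d : nat) (rho : K -> mat d).

Definition invariant (H : K -> Prop) (P : vec d -> Prop) : Prop :=
  forall h v, H h -> P v -> P (mxv (rho h) v).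

Definition irreducible_sub (H : K -> Prop) (P : vec d -> Prop) : Prop :=
  is_subspace P /\ invariant H P /\ (exists v, P v /\ exists i, v i <> C0) /\
  forall Q : vec d -> Prop, is_subspace Q -> invariant H Q -> (forall v, Q v -> P v) ->
    (forall v, Q v -> forall i, v i = C0) \/ (forall v, P v -> Q v).

Definition nontrivial_on (H : K -> Prop) (P : vec d -> Prop) : Prop :=
  exists h v, H h /\ P v /\ exists i, mxv (rho h) v i <> v i.

Definition fixed_space (H : K -> Prop) (v : vec d) : Prop :=
  forall h, H h -> forall i, mxv (rho h) v i = v i.

(* sum of the nontrivial isotypic components of R restricted to H, i.e. the
   sum of all irreducible H-subrepresentations not isomorphic to the trivial
   one (an irreducible representation is isomorphic to the trivial one iff
   the group acts trivially on it) *)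
Definition nontriv_isotypic_sum (H : K -> Prop) (v : vec d) : Prop :=
  exists (n : nat) (w : 'I_n -> vec d),
    (forall j, exists P, irreducible_sub H P /\ nontrivial_on H P /\ P (w j)) /\
    forall i, v i = Csum predT (fun j => w j i).
End RepDefs.

Definition is_basis_on (d m : nat) (J : pred 'I_m) (b : 'I_m -> vec d)
    (P : vec d -> Prop) : Prop :=
  (forall j, J j -> P (b j)) /\
  (forall c : 'I_m -> C, (forall i, lincomb J c b i = C0) -> forall j, J j -> c j = C0) /\
  (forall v, P v -> exists c : 'I_m -> C, forall i, v i = lincomb J c b i).

Definition stabE (G : qgraph) (K : finGroupType) (aE : K -> qE G -> qE G) (e : qE G)
  : K -> Prop := fun g => aE g e = e.

(* The choices made in the recipe (plus the change-of-basis matrices, which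
   are determined by them, see valid_choice). *)
Record recipe_choice (G : qgraph) (K : finGroupType) (d : nat) := RChoice {
  nI : nat ;                            (* number of edge orbits *)
  nN : nat ;                            (* number of vertex orbits *)
  repE : 'I_nI -> qE G ;                (* representatives e~^i *)
  orbE : qE G -> 'I_nI ;                (* index of the orbit of an edge *)
  repV : 'I_nN -> qV G ;                (* representatives v~_k *)
  orbV : qV G -> 'I_nN ;                (* index of the orbit of a vertex *)
  gsel : qE G -> bool -> K ;            (* the g_l : edge at the end (e,s) = g_l e~^{nu_l} *)
  gB : 'I_d -> vec d ;                  (* global basis B *)
  dI : 'I_nI -> nat ;                   (* d_i *)
  bI : 'I_nI -> 'I_d -> vec d ;         (* bases B^i *)
  cM : qE G -> bool -> mat d            (* [rho(g_l^{-1})]^B_{B^{nu_l}} *)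
}.

Arguments nI {G K d} r.
Arguments nN {G K d} r.
Arguments repE {G K d} r _.
Arguments orbE {G K d} r _.
Arguments repV {G K d} r _.
Arguments orbV {G K d} r _.
Arguments gsel {G K d} r _ _.
Arguments gB {G K d} r _ _.
Arguments dI {G K d} r _.
Arguments bI {G K d} r _ _ _.
Arguments cM {G K d} r _ _ _ _.

Definition valid_choice (G : qgraph) (K : finGroupType)
    (aV : K -> qV G -> qV G) (aE : K -> qE G -> qE G) (d : nat) (rho : K -> mat d)
    (c : recipe_choice G K d) : Prop :=
  (forall e i, (exists g, aE g (repE c i) = e) <-> orbE c e = i) /\
  (forall v k, (exists g, aV g (repV c k) = v) <-> orbV c v = k) /\
  (forall e s, aE (gsel c e s) (repE c (orbE c e)) = e) /\
  is_basis_on predT (gB c) (fun _ => True) /\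
  (forall i, (dI c i <= d)%N /\
     is_basis_on predT (bI c i) (fun _ => True) /\
     is_basis_on (fun j : 'I_d => (j < dI c i)%N) (bI c i)
                 (fixed_space rho (stabE aE (repE c i))) /\
     is_basis_on (fun j : 'I_d => (dI c i <= j)%N) (bI c i)
                 (nontriv_isotypic_sum rho (stabE aE (repE c i)))) /\
  (* column a of cM e s is the B^{orbE e}-coordinate vector of rho(g^{-1}) b_a *)
  (forall e s a i,
     mxv (rho ((gsel c e s)^-1)%g) (gB c a) i
     = lincomb predT (fun r => cM c e s r a) (bI c (orbE c e)) i).

(* edges e^i_j of the quotient, 1 <= j <= d_i *)
Definition qedge (G : qgraph) (K : finGroupType) (d : nat) (c : recipe_choice G K d) :=
  {p : 'I_(nI c) * 'I_d | (p.2 < dI c p.1)%N}.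

(* Row (r, a) of the
   conditions at v_k, column (end s of e^mu_j):
     A_{v_k}[(r,a),(mu,j)] = sum over the ends l at v~_k with nu_l = mu of
                             A_{v~_k}[r,l] * ([rho(g_l^{-1})]^B_{B^mu})[j,a],
   which is the entry of (A_{v~_k} (x) I_d) D Theta. *)
Definition quot_graph (G : qgraph) (K : finGroupType) (d : nat)
    (c : recipe_choice G K d) : qgraph :=
  @QGraph 'I_(nN c) (qedge c)
    (fun p => orbV c (qsrc (repE c (val p).1)))
    (fun p => orbV c (qtgt (repE c (val p).1)))
    (fun p => qlen (repE c (val p).1))
    (fun p => qlen_pos (repE c (val p).1))
    (fun k => (qRow (repV c k) * 'I_d)%type)
    (fun k ra p s =>
       Csum (fun es : (qE G * bool)%type =>
               [&& endpt es.1 es.2 == repV c k, orbE c es.1 == (val p).1 & es.2 == s])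
            (fun es => Cmul (qA ra.1 es.1 es.2) (cM c es.1 es.2 (val p).2 ra.2)))
    (fun k ra p s =>
       Csum (fun es : (qE G * bool)%type =>
               [&& endpt es.1 es.2 == repV c k, orbE c es.1 == (val p).1 & es.2 == s])
            (fun es => Cmul (qB ra.1 es.1 es.2) (cM c es.1 es.2 (val p).2 ra.2))).

(* Main.v *)
Require Import Defs.
From Stdlib Require Import Reals Lra Psatz ClassicalEpsilon FunctionalExtensionality.
From HB Require Import structures.
From mathcomp Require Import all_boot fingroup.
Import Defs.
Set Implicit Arguments. Unset Strict Implicit. Unset Printing Implicit Defensive.

Ltac Csimpl := repeat match goal with z : C |- _ => destruct z end;
  unfold Csub, Cadd, Cmul, Copp, C0, C1, CscaleR in *; simpl in *.
Ltac Cring := Csimpl; f_equal; ring.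
Open Scope R_scope.

Lemma CaddA : associative Cadd. Proof. move=> x y z; Cring. Qed.
Lemma CaddC : commutative Cadd. Proof. move=> x y; Cring. Qed.
Lemma Cadd0 : left_id C0 Cadd. Proof. move=> x; Cring. Qed.
Lemma CmulA : associative Cmul. Proof. move=> x y z; Cring. Qed.
Lemma CmulC : commutative Cmul. Proof. move=> x y; Cring. Qed.
Lemma Cmul1 : left_id C1 Cmul. Proof. move=> x; Cring. Qed.
Lemma Cmul0l : left_zero C0 Cmul. Proof. move=> x; Cring. Qed.
Lemma Cmul0r : right_zero C0 Cmul. Proof. move=> x; Cring. Qed.
Lemma CmulDl : left_distributive Cmul Cadd. Proof. move=> x y z; Cring. Qed.
Lemma CmulDr : right_distributive Cmul Cadd. Proof. move=> x y z; Cring. Qed.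

HB.instance Definition _ := Monoid.isComLaw.Build C C0 Cadd CaddA CaddC Cadd0.
HB.instance Definition _ := Monoid.isComLaw.Build C C1 Cmul CmulA CmulC Cmul1.
HB.instance Definition _ := Monoid.isMulLaw.Build C C0 Cmul Cmul0l Cmul0r.
HB.instance Definition _ := Monoid.isAddLaw.Build C Cmul Cadd CmulDl CmulDr.

Lemma CmulCA x y z : Cmul x (Cmul y z) = Cmul y (Cmul x z).
Proof. Cring. Qed.
Lemma Cadd0r x : Cadd x C0 = x. Proof. Cring. Qed.
Lemma Cmul1r x : Cmul x C1 = x. Proof. Cring. Qed.

Lemma vext d (u v : vec d) : (forall i, u i = v i) -> u = v.
Proof. move=> H; exact: functional_extensionality. Qed.

Lemma Csum_distrr (I : finType) (P : pred I) (F : I -> Defs.C) a :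
  Cmul a (Csum P F) = Csum P (fun i => Cmul a (F i)).
Proof. by rewrite /Csum big_distrr. Qed.
Lemma Csum_distrl (I : finType) (P : pred I) (F : I -> Defs.C) a :
  Cmul (Csum P F) a = Csum P (fun i => Cmul (F i) a).
Proof. by rewrite /Csum big_distrl. Qed.
Lemma Csum_exch (I J : finType) (P : pred I) (Q : pred J) (F : I -> J -> Defs.C) :
  Csum P (fun i => Csum Q (F i)) = Csum Q (fun j => Csum P (fun i => F i j)).
Proof. by rewrite /Csum exchange_big. Qed.
Lemma Csum_add (I : finType) (P : pred I) (F1 F2 : I -> Defs.C) :
  Csum P (fun i => Cadd (F1 i) (F2 i)) = Cadd (Csum P F1) (Csum P F2).
Proof. by rewrite /Csum big_split. Qed.
Lemma eq_Csum (I : finType) (P : pred I) (F1 F2 : I -> Defs.C) :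
  (forall i, P i -> F1 i = F2 i) -> Csum P F1 = Csum P F2.
Proof. by move=> H; rewrite /Csum; apply: eq_bigr. Qed.
Lemma eq_Csuml (I : finType) (P1 P2 : pred I) (F : I -> Defs.C) :
  P1 =1 P2 -> Csum P1 F = Csum P2 F.
Proof. by move=> H; rewrite /Csum; apply: eq_bigl. Qed.
Lemma Csum0 (I : finType) (P : pred I) (F : I -> Defs.C) :
  (forall i, P i -> F i = C0) -> Csum P F = C0.
Proof. by move=> H; rewrite /Csum big1. Qed.
Lemma Csum_mkcond (I : finType) (P : pred I) (F : I -> Defs.C) :
  Csum P F = Csum predT (fun i => if P i then F i else C0).
Proof. by rewrite /Csum big_mkcond. Qed.

Section Lin.
Variables (K : finGroupType) (d : nat) (rho : K -> mat d).
Hypothesis Hrep : is_rep rho.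

Lemma mxv_lincomb (M : mat d) m (J : pred 'I_m) x b :
  mxv M (lincomb J x b) = lincomb J x (fun j => mxv M (b j)).
Proof.
apply: vext => i; rewrite /mxv /lincomb.
under eq_Csum => k _ do rewrite Csum_distrr.
rewrite Csum_exch; apply: eq_Csum => j _.
by rewrite Csum_distrr; apply: eq_Csum => k _; rewrite CmulCA.
Qed.

Lemma mxv_add (M : mat d) u v : mxv M (vadd u v) = vadd (mxv M u) (mxv M v).
Proof.
apply: vext => i; rewrite /mxv /vadd -Csum_add; apply: eq_Csum => k _; exact: CmulDr.
Qed.

Lemma mxv_scale (M : mat d) c v : mxv M (vscale c v) = vscale c (mxv M v).
Proof.
apply: vext => i; rewrite /mxv /vscale Csum_distrr; apply: eq_Csum => k _; exact: CmulCA.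
Qed.

Lemma mxv_zero (M : mat d) : mxv M (@vzero d) = @vzero d.
Proof. apply: vext => i; rewrite /mxv /vzero; apply: Csum0 => k _; exact: Cmul0r. Qed.

Lemma rho_mul g h v : mxv (rho (g * h)%g) v = mxv (rho g) (mxv (rho h) v).
Proof.
apply: vext => i; rewrite /mxv.
under eq_Csum => k _ do rewrite (proj2 Hrep) Csum_distrl.
rewrite Csum_exch; apply: eq_Csum => j _.
by rewrite Csum_distrr; apply: eq_Csum => k _; rewrite CmulA.
Qed.

Lemma rho_1 v : mxv (rho 1%g) v = v.
Proof.
apply: vext => i; rewrite /mxv /Csum (bigD1 i) //= (proj1 Hrep) eqxx big1 ?Cadd0r ?Cmul1 //.
by move=> j /negPf ji; rewrite (proj1 Hrep) eq_sym ji Cmul0l.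
Qed.

Lemma rho_invK g v : mxv (rho (g^-1)%g) (mxv (rho g) v) = v.
Proof. by rewrite -rho_mul mulVg rho_1. Qed.
Lemma rho_Kinv g v : mxv (rho g) (mxv (rho (g^-1)%g) v) = v.
Proof. by rewrite -rho_mul mulgV rho_1. Qed.

End Lin.

Lemma CsumID (I : finType) (J : pred I) (F : I -> Defs.C) :
  Csum predT F = Cadd (Csum J F) (Csum (predC J) F).
Proof. by rewrite /Csum (bigID J) /=. Qed.

Definition Cm1 : Defs.C := mkC (Ropp R1) R0.
Lemma Copp_m1 z : Copp z = Cmul Cm1 z. Proof. rewrite /Cm1; Cring. Qed.
Lemma Csub_eq0 x y : Csub x y = C0 -> x = y.
Proof.
move=> H; have -> : x = Cadd (Csub x y) y by Cring.
rewrite H; exact: Cadd0.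
Qed.
Lemma Csub_mull a b z : Cmul (Csub a b) z = Csub (Cmul a z) (Cmul b z).
Proof. Cring. Qed.
Lemma Csum_sub (I : finType) (P : pred I) (F1 F2 : I -> Defs.C) :
  Csum P (fun i => Csub (F1 i) (F2 i)) = Csub (Csum P F1) (Csum P F2).
Proof.
rewrite /Csub Copp_m1 Csum_distrr -Csum_add; apply: eq_Csum => i _; by rewrite Copp_m1.
Qed.
Lemma Csubxx x : Csub x x = C0. Proof. Cring. Qed.

Section Coord.
Variable d : nat.

Definition coordOf (b : 'I_d -> vec d) (w : vec d) : 'I_d -> Defs.C :=
  epsilon (inhabits (fun _ : 'I_d => C0)) (fun x => w = lincomb predT x b).

Variable b : 'I_d -> vec d.
Hypothesis Hb : is_basis_on predT b (fun _ => True).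

Lemma coordP w : w = lincomb predT (coordOf b w) b.
Proof.
rewrite /coordOf; apply: (epsilon_spec (inhabits (fun _ : 'I_d => C0)) (fun x => w = lincomb predT x b)).
have [c Hc] := (proj2 (proj2 Hb)) w I.
by exists c; apply: vext.
Qed.

Lemma lincomb_uniq x y : lincomb predT x b = lincomb predT y b -> x = y.
Proof.
move=> H; apply: functional_extensionality => j.
apply: Csub_eq0.
have := (proj1 (proj2 Hb)) (fun j => Csub (x j) (y j)); apply=> // i.
rewrite /lincomb.
under eq_Csum => k _ do rewrite Csub_mull.
by rewrite Csum_sub -/(lincomb predT x b i) -/(lincomb predT y b i) H Csubxx.
Qed.

Lemma coord_uniq w x : w = lincomb predT x b -> coordOf b w = x.
Proof. move=> H; apply: lincomb_uniq; by rewrite -coordP. Qed.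

Lemma coord_lincomb m (J : pred 'I_m) x (vs : 'I_m -> vec d) :
  coordOf b (lincomb J x vs) = fun j => Csum J (fun a => Cmul (x a) (coordOf b (vs a) j)).
Proof.
apply: coord_uniq; apply: vext => i.
rewrite /lincomb.
transitivity (Csum J (fun a => Cmul (x a) (lincomb predT (coordOf b (vs a)) b i))).
  by apply: eq_Csum => a _; rewrite -coordP.
rewrite /lincomb.
under eq_Csum => a _ do rewrite Csum_distrr.
rewrite Csum_exch; apply: eq_Csum => j _.
by rewrite Csum_distrl; apply: eq_Csum => a _; rewrite CmulA.
Qed.

Lemma coord_add u v : coordOf b (vadd u v) = fun j => Cadd (coordOf b u j) (coordOf b v j).
Proof.
apply: coord_uniq; apply: vext => i.
rewrite /vadd {1}(coordP u) {1}(coordP v) /lincomb -Csum_add.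
by apply: eq_Csum => j _; rewrite CmulDl.
Qed.

Lemma coord_scale c u : coordOf b (vscale c u) = fun j => Cmul c (coordOf b u j).
Proof.
apply: coord_uniq; apply: vext => i.
rewrite /vscale {1}(coordP u) /lincomb Csum_distrr.
by apply: eq_Csum => j _; rewrite CmulA.
Qed.

End Coord.

Lemma subspace_lincomb d m (P : vec d -> Prop) (J : pred 'I_m) x b :
  is_subspace P -> (forall j, J j -> P (b j)) -> P (lincomb J x b).
Proof.
move=> [P0 [PD PS]] Hb; rewrite /lincomb /Csum.
elim: (index_enum _) => [|a r IH].
  have -> : (fun i : 'I_d => \big[Cadd/C0]_(j <- [::] | J j) Cmul (x j) (b j i)) = @vzero d.
    by apply: vext => i; rewrite big_nil.
  exact: P0.
case Ja: (J a).
  have -> : (fun i : 'I_d => \big[Cadd/C0]_(j <- a :: r | J j) Cmul (x j) (b j i))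
          = vadd (vscale (x a) (b a)) (fun i => \big[Cadd/C0]_(j <- r | J j) Cmul (x j) (b j i)).
    by apply: vext => i; rewrite big_cons Ja.
  by apply: PD => //; apply: PS; apply: Hb.
have -> : (fun i : 'I_d => \big[Cadd/C0]_(j <- a :: r | J j) Cmul (x j) (b j i))
        = (fun i => \big[Cadd/C0]_(j <- r | J j) Cmul (x j) (b j i)).
  by apply: vext => i; rewrite big_cons Ja.
exact: IH.
Qed.

Lemma lincomb_split d m (J : pred 'I_m) x (b : 'I_m -> vec d) :
  lincomb predT x b = vadd (lincomb J x b) (lincomb (predC J) x b).
Proof. apply: vext => i; by rewrite /lincomb /vadd (CsumID J). Qed.

Lemma Cmod_le_abs z : Cmod z <= Rabs (Re z) + Rabs (Im z).
Proof.
rewrite /Cmod.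
rewrite -(sqrt_Rsqr (Rabs (Re z) + Rabs (Im z))); last by have := Rabs_pos (Re z); have := Rabs_pos (Im z); lra.
apply: sqrt_le_1_alt.
rewrite /Rsqr.
have h1 := Rabs_pos (Re z); have h2 := Rabs_pos (Im z).
have e1 : Re z * Re z = Rabs (Re z) * Rabs (Re z) by rewrite -Rabs_mult Rabs_right //; nra.
have e2 : Im z * Im z = Rabs (Im z) * Rabs (Im z) by rewrite -Rabs_mult Rabs_right //; nra.
nra.
Qed.

Lemma abs_Re_le z : Rabs (Re z) <= Cmod z.
Proof.
rewrite /Cmod -sqrt_Rsqr_abs; apply: sqrt_le_1_alt.
have := Rle_0_sqr (Im z); rewrite /Rsqr; lra.
Qed.
Lemma abs_Im_le z : Rabs (Im z) <= Cmod z.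
Proof.
rewrite /Cmod -sqrt_Rsqr_abs; apply: sqrt_le_1_alt.
have := Rle_0_sqr (Re z); rewrite /Rsqr; lra.
Qed.

Lemma Cmod_add z w : Cmod (Cadd z w) <= 2 * (Cmod z + Cmod w).
Proof.
apply: Rle_trans (Cmod_le_abs _) _; rewrite /Cadd /=.
have := Rabs_triang (Re z) (Re w); have := Rabs_triang (Im z) (Im w).
have := abs_Re_le z; have := abs_Re_le w; have := abs_Im_le z; have := abs_Im_le w.
lra.
Qed.

Lemma Cmod_mul c z : Cmod (Cmul c z) <= 2 * (Rabs (Re c) + Rabs (Im c)) * Cmod z.
Proof.
apply: Rle_trans (Cmod_le_abs _) _; rewrite /Cmul /=.
have h1 := Rabs_triang (Re c * Re z) (- (Im c * Im z)).
have h2 := Rabs_triang (Re c * Im z) (Im c * Re z).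
rewrite Rabs_Ropp !Rabs_mult in h1; rewrite !Rabs_mult in h2.
have a1 := abs_Re_le z; have a2 := abs_Im_le z.
have b1 := Rabs_pos (Re c); have b2 := Rabs_pos (Im c).
have q1 := Rabs_pos (Re z); have q2 := Rabs_pos (Im z).
rewrite /Rminus; nra.
Qed.

Lemma Cmod_C0 : Cmod C0 = 0.
Proof. rewrite /Cmod /C0 /= /Rsqr; rewrite Rmult_0_l Rplus_0_l; exact: sqrt_0. Qed.


Lemma deriv_const0 a b x : has_deriv_within a b (fun _ => C0) x C0.
Proof.
move=> eps Heps; exists 1; split; first lra.
move=> h _ _ _ _.
have -> : Csub (CscaleR (/ h) (Csub C0 C0)) C0 = C0 by Cring.
by rewrite Cmod_C0.
Qed.

Lemma deriv_add a b x f g df dg :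
  has_deriv_within a b f x df -> has_deriv_within a b g x dg ->
  has_deriv_within a b (fun y => Cadd (f y) (g y)) x (Cadd df dg).
Proof.
move=> Hf Hg eps Heps.
have [d1 [Hd1 H1]] := Hf (eps / 4) ltac:(lra).
have [d2 [Hd2 H2]] := Hg (eps / 4) ltac:(lra).
exists (Rmin d1 d2); split; first by apply: Rmin_pos.
move=> h hn hd ha hb.
have E : Csub (CscaleR (/ h) (Csub (Cadd (f (x + h)) (g (x + h))) (Cadd (f x) (g x)))) (Cadd df dg)
  = Cadd (Csub (CscaleR (/ h) (Csub (f (x + h)) (f x))) df) (Csub (CscaleR (/ h) (Csub (g (x + h)) (g x))) dg).
  by Cring.
rewrite E; apply: Rle_lt_trans (Cmod_add _ _) _.
have := H1 h hn (Rlt_le_trans _ _ _ hd (Rmin_l _ _)) ha hb.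
have := H2 h hn (Rlt_le_trans _ _ _ hd (Rmin_r _ _)) ha hb.
lra.
Qed.

Lemma deriv_scale a b x f df c :
  has_deriv_within a b f x df ->
  has_deriv_within a b (fun y => Cmul c (f y)) x (Cmul c df).
Proof.
move=> Hf eps Heps.
set M := 2 * (Rabs (Re c) + Rabs (Im c)) + 1.
have HM : 0 < M by rewrite /M; have := Rabs_pos (Re c); have := Rabs_pos (Im c); lra.
have [d1 [Hd1 H1]] := Hf (eps / M) ltac:(apply: Rdiv_lt_0_compat; lra).
exists d1; split => // h hn hd ha hb.
have E : Csub (CscaleR (/ h) (Csub (Cmul c (f (x + h))) (Cmul c (f x)))) (Cmul c df)
  = Cmul c (Csub (CscaleR (/ h) (Csub (f (x + h)) (f x))) df) by Cring.
rewrite E; apply: Rle_lt_trans (Cmod_mul _ _) _.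
have := H1 h hn hd ha hb => Hlt.
have Hpos : 0 <= Cmod (Csub (CscaleR (/ h) (Csub (f (x + h)) (f x))) df) by apply: sqrt_pos.
have : M * Cmod (Csub (CscaleR (/ h) (Csub (f (x + h)) (f x))) df) < eps.
  have := Rmult_lt_compat_l M _ _ HM Hlt.
  by rewrite /Rdiv (Rmult_comm eps) -Rmult_assoc Rinv_r ?Rmult_1_l; lra.
rewrite /M; have := Rabs_pos (Re c); have := Rabs_pos (Im c); nra.
Qed.

Lemma deriv_sum (I : finType) (P : pred I) a b x (F : I -> R -> Defs.C) (dF : I -> Defs.C) :
  (forall i, P i -> has_deriv_within a b (F i) x (dF i)) ->
  has_deriv_within a b (fun y => Csum P (fun i => F i y)) x (Csum P dF).
Proof.
move=> H; rewrite /Csum.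
elim: (index_enum I) => [|i r IH].
  have -> : (fun y => \big[Cadd/C0]_(i <- [::] | P i) F i y) = fun _ => C0.
    by apply: functional_extensionality => y; rewrite big_nil.
  rewrite big_nil; exact: deriv_const0.
case Pi: (P i).
  have -> : (fun y => \big[Cadd/C0]_(j <- i :: r | P j) F j y)
     = fun y => Cadd (F i y) (\big[Cadd/C0]_(j <- r | P j) F j y).
    by apply: functional_extensionality => y; rewrite big_cons Pi.
  rewrite big_cons Pi; apply: deriv_add => //; exact: H.
have -> : (fun y => \big[Cadd/C0]_(j <- i :: r | P j) F j y)
   = fun y => \big[Cadd/C0]_(j <- r | P j) F j y.
  by apply: functional_extensionality => y; rewrite big_cons Pi.
by rewrite big_cons Pi.
Qed.

From Stdlib Require Import Classical.

Lemma mxv_sum d m (M : mat d) (w : 'I_m -> vec d) :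
  mxv M (fun i => Csum predT (fun j => w j i)) = fun i => Csum predT (fun j => mxv M (w j) i).
Proof.
apply: vext => i; rewrite /mxv.
under eq_Csum => k _ do rewrite Csum_distrr.
by rewrite Csum_exch.
Qed.

Lemma vec_nonzero d (v : vec d) : v <> @vzero d -> exists i, v i <> C0.
Proof.
move=> H; apply: NNPP => H2; apply: H; apply: vext => i.
by apply: NNPP => H3; apply: H2; exists i.
Qed.

Section Irr.
Variables (K : finGroupType) (d : nat) (rho : K -> mat d).
Hypothesis Hrep : is_rep rho.

Lemma irr_conj (H H' : K -> Prop) (g : K) (P : vec d -> Prop) :
  (forall k, H' k -> H (g^-1 * k * g)%g) -> (forall k, H k -> H' (g * k * g^-1)%g) ->
  irreducible_sub rho H P -> irreducible_sub rho H' (fun u => P (mxv (rho (g^-1)%g) u)).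
Proof.
move=> HH1 HH2 [[P0 [PD PS]] [Pinv [[v [Pv [i vi]]] Pirr]]].
split; [|split; [|split]].
- split; [by rewrite mxv_zero|split].
  + by move=> u1 u2 H1 H2; rewrite mxv_add; apply: PD.
  + by move=> c u H1; rewrite mxv_scale; apply: PS.
- move=> k u Hk Pu.
  have -> : mxv (rho (g^-1)%g) (mxv (rho k) u)
          = mxv (rho (g^-1 * k * g)%g) (mxv (rho (g^-1)%g) u).
    by rewrite !(rho_mul Hrep) (rho_Kinv Hrep).
  by apply: Pinv => //; apply: HH1.
- exists (mxv (rho g) v); split; first by rewrite (rho_invK Hrep).
  apply: vec_nonzero => H0; apply: vi.
  by rewrite -(rho_invK Hrep g v) H0 mxv_zero.
- move=> Q [Q0 [QD QS]] Qinv QP.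
  have := Pirr (fun v => Q (mxv (rho g) v)).
  case.
  + split; [by rewrite mxv_zero|split].
    * by move=> u1 u2 H1 H2; rewrite mxv_add; apply: QD.
    * by move=> c u H1; rewrite mxv_scale; apply: QS.
  + move=> k u Hk Qu.
    have -> : mxv (rho g) (mxv (rho k) u) = mxv (rho (g * k * g^-1)%g) (mxv (rho g) u).
      by rewrite !(rho_mul Hrep) (rho_invK Hrep).
    by apply: Qinv => //; apply: HH2.
  + move=> u Qu; have := QP _ Qu; by rewrite (rho_invK Hrep).
  + move=> Htriv; left => u Qu j.
    have := Htriv (mxv (rho (g^-1)%g) u); rewrite (rho_Kinv Hrep) => /(_ Qu) Hz.
    have -> : u = mxv (rho g) (mxv (rho (g^-1)%g) u) by rewrite (rho_Kinv Hrep).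
    have -> : mxv (rho (g^-1)%g) u = @vzero d by apply: vext.
    by rewrite mxv_zero.
  + move=> Hall; right => u Pu.
    have := Hall _ Pu; by rewrite (rho_Kinv Hrep).
Qed.

Lemma nontriv_conj (H H' : K -> Prop) (g : K) (P : vec d -> Prop) :
  (forall k, H k -> H' (g * k * g^-1)%g) ->
  nontrivial_on rho H P -> nontrivial_on rho H' (fun u => P (mxv (rho (g^-1)%g) u)).
Proof.
move=> HH2 [h [v [Hh [Pv [i Hi]]]]].
exists (g * h * g^-1)%g, (mxv (rho g) v); split; first exact: HH2.
split; first by rewrite (rho_invK Hrep).
apply: NNPP => Hn; apply: Hi.
have E : mxv (rho (g * h * g^-1)%g) (mxv (rho g) v) = mxv (rho g) v.
  apply: vext => j; apply: NNPP => Hj; apply: Hn; by exists j.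
move: E; rewrite !(rho_mul Hrep) (rho_invK Hrep) => E.
have := congr1 (mxv (rho (g^-1)%g)) E; rewrite !(rho_invK Hrep) => ->.
done.
Qed.

Lemma nontriv_subspace (H : K -> Prop) : is_subspace (nontriv_isotypic_sum rho H).
Proof.
split; [|split].
- exists 0%N, (fun _ => @vzero d); split; first by case.
  by move=> i; rewrite /vzero Csum0 //; case.
- move=> u v [n1 [w1 [H1 E1]]] [n2 [w2 [H2 E2]]].
  exists (n1 + n2)%N, (fun j => match split j with inl a => w1 a | inr b => w2 b end).
  split.
  + by move=> j; case: (split j) => a; [apply: H1|apply: H2].
  + move=> i; rewrite /vadd E1 E2 /Csum big_split_ord.
    congr Cadd; apply: eq_bigr => j _.
    * by have := unsplitK (inl j : 'I_n1 + 'I_n2) => /= ->.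
    * by have := unsplitK (inr j : 'I_n1 + 'I_n2) => /= ->.
- move=> c v [n [w [Hw E]]].
  exists n, (fun j => vscale c (w j)); split.
  + move=> j; have [P [Hirr [Pn Pw]]] := Hw j.
    exists P; split; [|split] => //.
    by have [[_ [_ PS]] _] := Hirr; apply: PS.
  + by move=> i; rewrite /vscale E Csum_distrr.
Qed.

End Irr.

Section Act.
Variables (G : qgraph) (K : finGroupType) (aV : K -> qV G -> qV G)
  (aE : K -> qE G -> qE G) (d : nat) (rho : K -> mat d).
Hypothesis Hact : is_qaction aV aE.
Hypothesis Hrep : is_rep rho.

Lemma aE1 e : aE 1%g e = e. Proof. by case: Hact => [? [? [H ?]]]; apply: H. Qed.
Lemma aEM g h e : aE (g * h)%g e = aE g (aE h e).
Proof. by case: Hact => [? [? [? [H ?]]]]; apply: H. Qed.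
Lemma aV1 v : aV 1%g v = v. Proof. by case: Hact => [H ?]; apply: H. Qed.
Lemma aVM g h v : aV (g * h)%g v = aV g (aV h v).
Proof. by case: Hact => [? [H ?]]; apply: H. Qed.
Lemma aE_invK g e : aE (g^-1)%g (aE g e) = e. Proof. by rewrite -aEM mulVg aE1. Qed.
Lemma aE_Kinv g e : aE g (aE (g^-1)%g e) = e. Proof. by rewrite -aEM mulgV aE1. Qed.
Lemma aV_invK g v : aV (g^-1)%g (aV g v) = v. Proof. by rewrite -aVM mulVg aV1. Qed.
Lemma aV_Kinv g v : aV g (aV (g^-1)%g v) = v. Proof. by rewrite -aVM mulgV aV1. Qed.
Lemma aE_src g e : qsrc (aE g e) = aV g (qsrc e).
Proof. by case: Hact => [? [? [? [? [H ?]]]]]; apply: H. Qed.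
Lemma aE_tgt g e : qtgt (aE g e) = aV g (qtgt e).
Proof. by case: Hact => [? [? [? [? [? [H ?]]]]]]; apply: H. Qed.
Lemma aE_len g e : qlen (aE g e) = qlen e.
Proof. by case: Hact => [? [? [? [? [? [? [H ?]]]]]]]; apply: H. Qed.
Lemma aE_endpt g e s : endpt (aE g e) s = aV g (endpt e s).
Proof. by case: s; rewrite /endpt ?aE_src ?aE_tgt. Qed.
Lemma sat_act g v (a b : qE G -> bool -> Defs.C) :
  sat_at v a b -> sat_at (aV g v) (fun e s => a (aE (g^-1)%g e) s) (fun e s => b (aE (g^-1)%g e) s).
Proof. by case: Hact => [? [? [? [? [? [? [? H]]]]]]]; move/(H g v a b). Qed.

Definition Nsp e := nontriv_isotypic_sum rho (stabE aE e).
Definition Fsp e := fixed_space rho (stabE aE e).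

Lemma N_transport e g v : Nsp e v -> Nsp (aE g e) (mxv (rho g) v).
Proof.
move=> [n [w [Hw E]]].
exists n, (fun j => mxv (rho g) (w j)); split.
- move=> j; have [P [Hirr [Hnt Pw]]] := Hw j.
  exists (fun u => P (mxv (rho (g^-1)%g) u)); split; [|split].
  + apply: (irr_conj Hrep) Hirr.
    * move=> k; rewrite /stabE => Hk.
      by rewrite !aEM Hk aE_invK.
    * move=> k; rewrite /stabE => Hk.
      by rewrite !aEM aE_invK Hk.
  + apply: (nontriv_conj Hrep) Hnt.
    move=> k; rewrite /stabE => Hk.
    by rewrite !aEM aE_invK Hk.
  + by rewrite (rho_invK Hrep).
- have -> : v = fun i => Csum predT (fun j => w j i) by apply: vext.
  by rewrite mxv_sum.
Qed.

Lemma F_subspace e : is_subspace (Fsp e).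
Proof.
split; [|split].
- by move=> h _ i; rewrite mxv_zero.
- by move=> u v Hu Hv h Hh i; rewrite mxv_add /vadd Hu // Hv.
- by move=> c v Hv h Hh i; rewrite mxv_scale /vscale Hv.
Qed.

Lemma lincomb_split2 m (J : pred 'I_m) (J' : pred 'I_m) x (b : 'I_m -> vec d)
  (HJ : forall j, J' j = ~~ J j) :
  lincomb predT x b = vadd (lincomb J x b) (lincomb J' x b).
Proof.
rewrite (lincomb_split J); congr vadd.
by apply: vext => i; rewrite /lincomb; apply: eq_Csuml => j /=; rewrite HJ.
Qed.

Lemma lincomb_glue m (J : pred 'I_m) (J' : pred 'I_m) x y (b : 'I_m -> vec d)
  (HJ : forall j, J' j = ~~ J j) :
  vadd (lincomb J x b) (lincomb J' y b) = lincomb predT (fun j => if J j then x j else y j) b.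
Proof.
rewrite (lincomb_split2 _ _ HJ); apply: vext => i; rewrite /vadd /lincomb.
congr Cadd; apply: eq_Csum => j Hj.
  by rewrite Hj.
by move: Hj; rewrite HJ => /negPf ->.
Qed.

Lemma vaddA (u v w : vec d) : vadd u (vadd v w) = vadd (vadd u v) w.
Proof. apply: vext => i; exact: CaddA. Qed.

Section Adapted.
Variables (e : qE G) (dd : nat) (b : 'I_d -> vec d).
Hypothesis Hb : is_basis_on predT b (fun _ => True).
Hypothesis HbF : is_basis_on (fun j : 'I_d => (j < dd)%N) b (Fsp e).
Hypothesis HbN : is_basis_on (fun j : 'I_d => (dd <= j)%N) b (Nsp e).

Let J := fun j : 'I_d => (j < dd)%N.
Let J' := fun j : 'I_d => (dd <= j)%N.
Let HJ : forall j, J' j = ~~ J j. Proof. by move=> j; rewrite /J /J' leqNgt. Qed.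

Lemma split_fix (j : 'I_d) (Hj : (j < dd)%N) u n :
  Nsp e n -> coordOf b (vadd u n) j = coordOf b u j.
Proof.
move=> Hn.
have Hn' : Nsp e (vadd (lincomb J' (coordOf b u) b) n).
  apply: (proj1 (proj2 (nontriv_subspace _ _))) => //.
  apply: subspace_lincomb; first exact: nontriv_subspace.
  by move=> k Hk; apply: (proj1 HbN).
have [y Hy] := (proj2 (proj2 HbN)) _ Hn'.
have E : vadd u n = lincomb predT (fun j => if J j then coordOf b u j else y j) b.
  rewrite -(lincomb_glue _ _ _ HJ).
  have -> : lincomb J' y b = vadd (lincomb J' (coordOf b u) b) n by apply: vext => i; rewrite Hy.
  by rewrite vaddA -(lincomb_split2 _ _ HJ) -coordP.
by rewrite (coord_uniq Hb E) /J Hj.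
Qed.

Lemma fix_part u : Fsp e (lincomb J (coordOf b u) b).
Proof. apply: subspace_lincomb; first exact: F_subspace. by move=> k Hk; apply: (proj1 HbF). Qed.

Lemma nt_part u : Nsp e (lincomb J' (coordOf b u) b).
Proof. apply: subspace_lincomb; first exact: nontriv_subspace. by move=> k Hk; apply: (proj1 HbN). Qed.

Lemma decomp u : u = vadd (lincomb J (coordOf b u) b) (lincomb J' (coordOf b u) b).
Proof. by rewrite -(lincomb_split2 _ _ HJ) -coordP. Qed.

Lemma coord_stab (j : 'I_d) (Hj : (j < dd)%N) k v :
  stabE aE e k -> coordOf b (mxv (rho k) v) j = coordOf b v j.
Proof.
move=> Hk.
rewrite {1}(decomp v) mxv_add.
have -> : mxv (rho k) (lincomb J (coordOf b v) b) = lincomb J (coordOf b v) b.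
  by apply: vext => i; apply: (fix_part v).
rewrite split_fix //; last by rewrite -{1}Hk; apply: N_transport; apply: nt_part.
by rewrite {2}(decomp v) split_fix //; apply: nt_part.
Qed.

Lemma coord_welldef (j : 'I_d) (Hj : (j < dd)%N) g1 g2 w :
  aE g1 e = aE g2 e ->
  coordOf b (mxv (rho (g1^-1)%g) w) j = coordOf b (mxv (rho (g2^-1)%g) w) j.
Proof.
move=> Hg.
have -> : mxv (rho (g1^-1)%g) w = mxv (rho (g1^-1 * g2)%g) (mxv (rho (g2^-1)%g) w).
  by rewrite (rho_mul Hrep) (rho_Kinv Hrep).
apply: coord_stab => //; by rewrite /stabE aEM -Hg aE_invK.
Qed.

End Adapted.

Section Choice.
Variable c : recipe_choice G K d.
Hypothesis Hc : valid_choice aV aE rho c.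

Lemma Horb e i : (exists g, aE g (repE c i) = e) <-> orbE c e = i.
Proof. by case: Hc => [H _]; apply: H. Qed.
Lemma Horbv v k : (exists g, aV g (repV c k) = v) <-> orbV c v = k.
Proof. by case: Hc => [_ [H _]]; apply: H. Qed.
Lemma gselP e s : aE (gsel c e s) (repE c (orbE c e)) = e.
Proof. by case: Hc => [_ [_ [H _]]]; apply: H. Qed.
Lemma gB_basis : is_basis_on predT (gB c) (fun _ => True).
Proof. by case: Hc => [_ [_ [_ [H _]]]]. Qed.
Lemma bI_basis i : is_basis_on predT (bI c i) (fun _ => True).
Proof. by case: Hc => [_ [_ [_ [_ [H _]]]]]; case: (H i) => [_ [H2 _]]. Qed.
Lemma bI_F i : is_basis_on (fun j : 'I_d => (j < dI c i)%N) (bI c i) (Fsp (repE c i)).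
Proof. by case: Hc => [_ [_ [_ [_ [H _]]]]]; case: (H i) => [_ [_ [H2 _]]]. Qed.
Lemma bI_N i : is_basis_on (fun j : 'I_d => (dI c i <= j)%N) (bI c i) (Nsp (repE c i)).
Proof. by case: Hc => [_ [_ [_ [_ [H _]]]]]; case: (H i) => [_ [_ [_ H2]]]. Qed.
Lemma cM_coord e s a r :
  cM c e s r a = coordOf (bI c (orbE c e)) (mxv (rho ((gsel c e s)^-1)%g) (gB c a)) r.
Proof.
case: Hc => [_ [_ [_ [_ [_ H]]]]].
rewrite (@coord_uniq _ _ (bI_basis (orbE c e)) _ (fun r => cM c e s r a)) //.
by apply: vext => i; rewrite H.
Qed.

Lemma orbE_rep i : orbE c (repE c i) = i.
Proof. apply/Horb; exists 1%g; exact: aE1. Qed.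
Lemma orbE_act g e : orbE c (aE g e) = orbE c e.
Proof.
apply/Horb; exists (g * gsel c e false)%g; by rewrite aEM gselP.
Qed.
Lemma orbV_act g v : orbV c (aV g v) = orbV c v.
Proof.
have [g' Hg'] := (proj2 (Horbv v (orbV c v))) erefl.
apply/Horbv; exists (g * g')%g; by rewrite aVM Hg'.
Qed.
Lemma orbV_rep k : orbV c (repV c k) = k.
Proof. apply/Horbv; exists 1%g; exact: aV1. Qed.

Lemma same_orbit e1 e2 : orbE c e1 = orbE c e2 <-> exists g, aE g e2 = e1.
Proof.
split.
- move=> H; exists (gsel c e1 false * (gsel c e2 false)^-1)%g.
  rewrite aEM.
  have E2 := gselP e2 false.
  have -> : aE (gsel c e2 false)^-1 e2 = repE c (orbE c e2) by have := aE_invK (gsel c e2 false) (repE c (orbE c e2)); rewrite E2.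
  by rewrite -H gselP.
- by move=> [g <-]; rewrite orbE_act.
Qed.

Definition coordc i := coordOf (bI c i).

Definition U (X : Type) (a : qedge c -> X -> Defs.C) (w : vec d) (e : qE G) (t : X) : Defs.C :=
  Csum (fun p : qedge c => (val p).1 == orbE c e)
       (fun p => Cmul (coordc (orbE c e) (mxv (rho ((gsel c e false)^-1)%g) w) (val p).2) (a p t)).

Lemma coordc_welldef (p : qedge c) g1 g2 w :
  aE g1 (repE c (val p).1) = aE g2 (repE c (val p).1) ->
  coordc (val p).1 (mxv (rho (g1^-1)%g) w) (val p).2 = coordc (val p).1 (mxv (rho (g2^-1)%g) w) (val p).2.
Proof.
move=> H; apply: (coord_welldef (bI_basis _) (bI_F _) (bI_N _)) => //.
exact: (valP p).
Qed.

Lemma U_welldef (X : Type) (a : qedge c -> X -> Defs.C) w e t g : aE g (repE c (orbE c e)) = e ->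
  U a w e t = Csum (fun p : qedge c => (val p).1 == orbE c e)
       (fun p => Cmul (coordc (orbE c e) (mxv (rho (g^-1)%g) w) (val p).2) (a p t)) :> Defs.C.
Proof.
move=> Hg; rewrite /U; apply: eq_Csum => p /eqP Hp; congr Cmul.
rewrite -Hp; apply: coordc_welldef; by rewrite Hp Hg gselP.
Qed.

Lemma U_equiv (X : Type) (a : qedge c -> X -> Defs.C) w e t g : U a (mxv (rho (g^-1)%g) w) (aE (g^-1)%g e) t = U (X:=X) a w e t.
Proof.
rewrite /U orbE_act; apply: eq_Csum => p /eqP Hp; congr Cmul.
rewrite -(rho_mul Hrep) -invMg -Hp; apply: coordc_welldef.
rewrite Hp aEM gselP.
have := gselP (aE (g^-1)%g e) false; rewrite orbE_act => ->; exact: aE_Kinv.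
Qed.

Lemma U_lin (X : Type) (a : qedge c -> X -> Defs.C) (x : 'I_d -> Defs.C) (vs : 'I_d -> vec d) e t :
  U (X:=X) a (lincomb predT x vs) e t = Csum predT (fun a0 => Cmul (x a0) (U a (vs a0) e t)).
Proof.
rewrite /U mxv_lincomb /coordc (coord_lincomb (bI_basis _)).
under eq_Csum => p _ do rewrite Csum_distrl.
rewrite Csum_exch; apply: eq_Csum => a0 _.
by rewrite Csum_distrr; apply: eq_Csum => p _; rewrite CmulA.
Qed.


Lemma endq_orb e s : orbV c (endpt (repE c (orbE c e)) s) = orbV c (endpt e s).
Proof. by rewrite -[in RHS](gselP e s) aE_endpt orbV_act. Qed.

Lemma endq (p : qedge c) s : endpt (G:=quot_graph c) p s = orbV c (endpt (repE c (val p).1) s).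
Proof. by case: s. Qed.

Lemma sum_pair_s (F : qedge c -> bool -> Defs.C) (Pp : pred (qedge c)) s0 :
  Csum (fun esq : qedge c * bool => Pp esq.1 && (s0 == esq.2)) (fun esq => F esq.1 esq.2)
  = Csum Pp (fun p => F p s0).
Proof.
rewrite /Csum -(pair_big_dep Pp (fun _ s => s0 == s) F).
apply: eq_bigr => p _.
rewrite (eq_bigl (fun s => s == s0)); last by move=> s; rewrite eq_sym.
by rewrite big_pred1_eq.
Qed.

Lemma coreA (Acoef : qE G -> bool -> Defs.C) (a : qedge c -> bool -> Defs.C) k a0 :
  Csum (fun es : qedge c * bool => endpt (G:=quot_graph c) es.1 es.2 == k)
   (fun es => Cmul (Csum (fun es' : qE G * bool =>
        [&& endpt es'.1 es'.2 == repV c k, orbE c es'.1 == (val es.1).1 & es'.2 == es.2])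
        (fun es' => Cmul (Acoef es'.1 es'.2) (cM c es'.1 es'.2 (val es.1).2 a0))) (a es.1 es.2))
  = Csum (fun es : qE G * bool => endpt es.1 es.2 == repV c k)
      (fun es => Cmul (Acoef es.1 es.2) (U a (gB c a0) es.1 es.2)).
Proof.
under eq_Csum => esq _ do rewrite Csum_distrl.
rewrite /Csum (exchange_big_dep (fun es' : qE G * bool => endpt es'.1 es'.2 == repV c k)); last first.
  by move=> esq es' _ /and3P [].
apply: eq_bigr => es' Hes'.
rewrite (eq_bigl (fun esq : qedge c * bool =>
   ((val esq.1).1 == orbE c es'.1) && (es'.2 == esq.2))); last first.
  move=> [p s] /=; rewrite Hes' /=.
  rewrite [orbE c es'.1 == _]eq_sym.
  case E1: ((sval p).1 == orbE c es'.1); rewrite ?andbF //.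
  case E2: (es'.2 == s); rewrite ?andbF //.
  by rewrite andbT endq (eqP E1) -(eqP E2) endq_orb (eqP Hes') orbV_rep eqxx.
rewrite -/(Csum _ _).
rewrite (sum_pair_s (fun p s => Cmul (Cmul (Acoef es'.1 es'.2) (cM c es'.1 es'.2 (val p).2 a0)) (a p s))
           (fun p => (val p).1 == orbE c es'.1) es'.2).
rewrite /U Csum_distrr; apply: eq_Csum => p /eqP Hp.
rewrite -CmulA; congr Cmul; congr Cmul.
rewrite cM_coord /coordc -Hp; apply: coordc_welldef.
by rewrite Hp !gselP.
Qed.

Lemma lin2_aux A B x u v :
  Cadd (Cmul A (Cmul x u)) (Cmul B (Cmul x v)) = Cmul x (Cadd (Cmul A u) (Cmul B v)).
Proof. Cring. Qed.

Definition Gsum k (a b : qedge c -> bool -> Defs.C) (r : qRow (repV c k)) (w : vec d) :=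
  Csum (fun es : qE G * bool => endpt es.1 es.2 == repV c k)
    (fun es => Cadd (Cmul (qA r es.1 es.2) (U a w es.1 es.2))
                    (Cmul (qB r es.1 es.2) (U b w es.1 es.2))).

Lemma Gsum_lin (k : 'I_(nN c)) (a b : qedge c -> bool -> Defs.C) (r : qRow (repV c k)) (x : 'I_d -> Defs.C) :
  Gsum a b r (lincomb predT x (gB c)) = Csum predT (fun a0 => Cmul (x a0) (Gsum a b r (gB c a0))).
Proof.
rewrite /Gsum.
under eq_Csum => es _ do rewrite !U_lin !Csum_distrr -Csum_add.
rewrite Csum_exch; apply: eq_Csum => a0 _.
rewrite Csum_distrr; apply: eq_Csum => es _.
exact: lin2_aux.
Qed.

Lemma lemA k (a b : qedge c -> bool -> Defs.C) :
  sat_at (G:=quot_graph c) k a b <-> forall w, sat_at (repV c k) (U a w) (U b w).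
Proof.
have Hrow : forall r1 a0, Csum (fun es : qE (quot_graph c) * bool => endpt es.1 es.2 == k)
         (fun es => Cadd (Cmul (qA (q:=quot_graph c) ((r1, a0) : qRow (q:=quot_graph c) k) es.1 es.2) (a es.1 es.2))
                         (Cmul (qB (q:=quot_graph c) ((r1, a0) : qRow (q:=quot_graph c) k) es.1 es.2) (b es.1 es.2)))
        = Gsum a b r1 (gB c a0).
  move=> r1 a0; rewrite Csum_add /Gsum Csum_add /=.
  by rewrite (coreA (qA r1)) (coreA (qB r1)).
split.
- move=> H w r.
  rewrite -/(Gsum a b r w) (coordP gB_basis w) Gsum_lin Csum0 // => a0 _.
  by rewrite -Hrow H Cmul0r.
- move=> H [r1 a0].
  by rewrite Hrow; apply: H.
Qed.

Lemma coord_basis_vec i (j : 'I_d) : coordc i (bI c i j) = fun j' => if j' == j then C1 else C0.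
Proof.
apply: (coord_uniq (bI_basis i)); apply: vext => k.
rewrite /lincomb /Csum (bigD1 j) //= eqxx Cmul1 big1 ?Cadd0r //.
by move=> j' /negPf ->; rewrite Cmul0l.
Qed.

Lemma U_rep (X : Type) (a : qedge c -> X -> Defs.C) (p : qedge c) t :
  U a (bI c (val p).1 (val p).2) (repE c (val p).1) t = a p t.
Proof.
rewrite /U orbE_rep.
rewrite (eq_Csum (F2 := fun p' : qedge c => Cmul (if (val p').2 == (val p).2 then C1 else C0) (a p' t))); last first.
  move=> p' /eqP Hp'; congr Cmul.
  rewrite -Hp'.
  rewrite (coordc_welldef (g2 := 1%g)); last first.
    by rewrite aE1 Hp'; have := gselP (repE c (val p).1) false; rewrite orbE_rep.
  by rewrite invg1 (rho_1 Hrep) Hp' coord_basis_vec.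
rewrite /Csum (bigD1 p) //= eqxx Cmul1 big1 ?Cadd0r // => p' /andP [/eqP H1 H2].
case E: ((val p').2 == (val p).2); last by rewrite Cmul0l.
case/eqP: H2; apply: val_inj => /=.
by rewrite [sval p']surjective_pairing [sval p]surjective_pairing H1 (eqP E).
Qed.

Lemma U_inj (X : Type) (a a' : qedge c -> X -> Defs.C) :
  (forall w e t, U a w e t = U a' w e t) -> forall p t, a p t = a' p t.
Proof. by move=> H p t; rewrite -U_rep H U_rep. Qed.

End Choice.

Lemma sum_qedge (c : recipe_choice G K d) i (F : 'I_d -> Defs.C) :
  Csum (fun p : qedge c => (val p).1 == i) (fun p => F (val p).2)
  = Csum (fun j : 'I_d => (j < dI c i)%N) F.
Proof.
symmetry.
rewrite /Csum (reindex_omap (fun p : qedge c => (val p).2) (fun j => insub (i, j) : option (qedge c))).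
  apply: eq_bigl => p /=.
  case: insubP => [q Hq Eq | Hq].
    apply/idP/idP.
      move=> /andP [_ /eqP [<-]]; by rewrite Eq.
    move=> /eqP Hp; apply/andP; split.
      by rewrite -Hp; exact: (valP p).
    apply/eqP; congr Some; apply: val_inj; rewrite Eq /=.
    by rewrite -Hp -surjective_pairing.
  apply/idP/idP => [/andP [_ //]|/eqP Hp].
  by case/negP: Hq; rewrite /= -Hp; exact: (valP p).
move=> j Hj; by rewrite insubT.
Qed.

Definition tr (E1 E2 : finType) (X : Type) (T : E2 -> E1 -> Defs.C) (a : E1 -> X -> Defs.C) : E2 -> X -> Defs.C :=
  fun p2 t => Csum predT (fun p1 => Cmul (T p2 p1) (a p1 t)).

Section Two.
Variables c1 c2 : recipe_choice G K d.
Hypothesis Hc1 : valid_choice aV aE rho c1.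
Hypothesis Hc2 : valid_choice aV aE rho c2.

Definition Tm : qedge c2 -> qedge c1 -> Defs.C := fun p2 p1 =>
  if orbE c2 (repE c1 (val p1).1) == (val p2).1 then
    coordc (val p1).1 (mxv (rho (gsel c2 (repE c1 (val p1).1) false)) (bI c2 (val p2).1 (val p2).2)) (val p1).2
  else C0.

Lemma orb12 e1 e2 : (orbE c1 e1 == orbE c1 e2) = (orbE c2 e1 == orbE c2 e2).
Proof.
apply/eqP/eqP => /(same_orbit _) => H; apply/(same_orbit _) => //; exact: H.
Qed.

Lemma KI (e : qE G) (p1 : qedge c1) w : (val p1).1 = orbE c1 e ->
  Csum (fun p2 : qedge c2 => (val p2).1 == orbE c2 e)
    (fun p2 => Cmul (coordc (orbE c2 e) (mxv (rho ((gsel c2 e false)^-1)%g) w) (val p2).2)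
       (coordc (val p1).1 (mxv (rho (gsel c2 (repE c1 (val p1).1) false)) (bI c2 (orbE c2 e) (val p2).2)) (val p1).2))
  = coordc (val p1).1 (mxv (rho ((gsel c1 e false)^-1)%g) w) (val p1).2.
Proof.
move=> Hp1.
set i2 := orbE c2 e.
set h := gsel c2 (repE c1 (val p1).1) false.
set y := mxv (rho ((gsel c2 e false)^-1)%g) w.
have Hi2 : orbE c2 (repE c1 (val p1).1) = i2.
  apply/eqP; rewrite /i2 -orb12 (orbE_rep Hc1); apply/eqP; exact: Hp1.
have Hh : aE h (repE c2 i2) = repE c1 (val p1).1.
  by rewrite /h -Hi2 gselP.
rewrite (sum_qedge i2 (fun j => Cmul (coordc i2 y j)
   (coordc (val p1).1 (mxv (rho h) (bI c2 i2 j)) (val p1).2))).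
have -> : Csum (fun j : 'I_d => (j < dI c2 i2)%N) (fun j => Cmul (coordc i2 y j)
   (coordc (val p1).1 (mxv (rho h) (bI c2 i2 j)) (val p1).2))
   = coordc (val p1).1 (mxv (rho h) (lincomb (fun j : 'I_d => (j < dI c2 i2)%N) (coordc i2 y) (bI c2 i2))) (val p1).2.
  by rewrite mxv_lincomb /coordc (coord_lincomb (bI_basis Hc1 _)).
rewrite /coordc.
rewrite -(@split_fix _ _ _ (bI_basis Hc1 _) (bI_N Hc1 _) _ (valP p1) _
            (mxv (rho h) (lincomb (fun j : 'I_d => (dI c2 i2 <= j)%N) (coordOf (bI c2 i2) y) (bI c2 i2)))); last first.
  rewrite -Hh; apply: N_transport; exact: (nt_part (bI_N Hc2 _)).
rewrite -mxv_add -(decomp (dI c2 i2) (bI_basis Hc2 _) y) /y -(rho_mul Hrep).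
have -> : (h * (gsel c2 e false)^-1 = ((gsel c2 e false) * h^-1)^-1)%g by rewrite invMg invgK.
apply: (coord_welldef (bI_basis Hc1 _) (bI_F Hc1 _) (bI_N Hc1 _) (valP p1)).
rewrite aEM.
have -> : aE (h^-1)%g (repE c1 (val p1).1) = repE c2 i2 by rewrite -Hh aE_invK.
rewrite /i2 (gselP Hc2).
by have := gselP Hc1 e false; rewrite -Hp1 => ->.
Qed.

Lemma TI (X : Type) (a : qedge c1 -> X -> Defs.C) w e t :
  U (c:=c2) (tr Tm a) w e t = U (c:=c1) a w e t.
Proof.
rewrite /U /tr.
under eq_Csum => p2 _ do rewrite Csum_distrr.
rewrite Csum_exch [RHS]Csum_mkcond; apply: eq_Csum => p1 _.
case E: ((val p1).1 == orbE c1 e).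
- have Hi : orbE c2 (repE c1 (val p1).1) = orbE c2 e.
    by apply/eqP; rewrite -orb12 (orbE_rep Hc1).
  rewrite (eq_Csum (F2 := fun p2 : qedge c2 => Cmul (Cmul (coordc (orbE c2 e) (mxv (rho ((gsel c2 e false)^-1)%g) w) (val p2).2)
       (coordc (val p1).1 (mxv (rho (gsel c2 (repE c1 (val p1).1) false)) (bI c2 (orbE c2 e) (val p2).2)) (val p1).2)) (a p1 t))); last first.
    move=> p2 /eqP Hp2; rewrite /Tm Hi -Hp2 eqxx CmulA //.
  rewrite -Csum_distrl KI; [by rewrite (eqP E) | exact/eqP].
- rewrite /=; apply: Csum0 => p2 /eqP Hp2; rewrite /Tm.
  case E2: (orbE c2 (repE c1 (val p1).1) == (val p2).1); last by rewrite Cmul0l Cmul0r.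
  move: E2; rewrite Hp2 -orb12 (orbE_rep Hc1) E //.
Qed.

Lemma Tm_len p2 p1 : Tm p2 p1 <> C0 -> qlen (repE c2 (val p2).1) = qlen (repE c1 (val p1).1).
Proof.
rewrite /Tm; case: ifP => [/eqP H _|]; last by [].
rewrite -H; have E := gselP Hc2 (repE c1 (val p1).1) false.
by rewrite -[in RHS]E aE_len.
Qed.

Lemma bval_tr (F : qedge c1 -> R -> Defs.C) :
  bval (G:=quot_graph c2) (tr Tm F) = tr Tm (bval (G:=quot_graph c1) F).
Proof.
apply: functional_extensionality => p2; apply: functional_extensionality => s.
case: s; rewrite /bval /tr //=; apply: eq_Csum => p1 _.
case: (classic (Tm p2 p1 = C0)) => [->|H]; first by rewrite !Cmul0l.
by rewrite (Tm_len H).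
Qed.

Lemma dval_tr (F : qedge c1 -> R -> Defs.C) :
  dval (G:=quot_graph c2) (tr Tm F) = tr Tm (dval (G:=quot_graph c1) F).
Proof.
apply: functional_extensionality => p2; apply: functional_extensionality => s.
case: s; rewrite /dval /tr //=.
rewrite Copp_m1 Csum_distrr; apply: eq_Csum => p1 _.
case: (classic (Tm p2 p1 = C0)) => [->|H]; first by rewrite !Cmul0l Cmul0r.
rewrite (Tm_len H) Copp_m1; rewrite /Cm1; Cring.
Qed.

Lemma allv (bF dF : qedge c1 -> bool -> Defs.C) :
  (forall k1, sat_at (G:=quot_graph c1) k1 bF dF) ->
  forall v w, sat_at v (U bF w) (U dF w).
Proof.
move=> Hv v w.
have [g Hg] := (proj2 (Horbv Hc1 v (orbV c1 v))) erefl.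
have H1 := (proj1 (lemA Hc1 (orbV c1 v) bF dF)) (Hv _) (mxv (rho (g^-1)%g) w).
have := sat_act (g:=g) H1; rewrite Hg.
have -> : (fun e s => U bF (mxv (rho (g^-1)%g) w) (aE (g^-1)%g e) s) = U bF w.
  by apply: functional_extensionality => e; apply: functional_extensionality => s; rewrite (U_equiv Hc1).
have -> : (fun e s => U dF (mxv (rho (g^-1)%g) w) (aE (g^-1)%g e) s) = U dF w.
  by apply: functional_extensionality => e; apply: functional_extensionality => s; rewrite (U_equiv Hc1).
done.
Qed.

Lemma Phi12 lam F : Phi (quot_graph c1) lam F -> Phi (quot_graph c2) lam (tr Tm F).
Proof.
move=> [F' [F'' [Hd Hv]]].
exists (tr Tm F'), (tr Tm F''); split.
- move=> p2 x Hx.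
  have Hterm : forall p1, Tm p2 p1 <> C0 -> in_edge (G:=quot_graph c1) p1 x.
    by move=> p1 H; move: Hx; rewrite /in_edge /= (Tm_len H).
  have Hlen : forall p1, Tm p2 p1 <> C0 -> qlen (q:=quot_graph c2) p2 = qlen (q:=quot_graph c1) p1.
    by move=> p1 H; rewrite /= (Tm_len H).
  split; [|split].
  + rewrite /tr; apply: (deriv_sum (F := fun p1 y => Cmul (Tm p2 p1) (F p1 y))) => p1 _.
    case: (classic (Tm p2 p1 = C0)) => [E|H].
      rewrite E Cmul0l.
      have -> : (fun y => Cmul C0 (F p1 y)) = fun _ => C0.
        by apply: functional_extensionality => y; rewrite Cmul0l.
      exact: deriv_const0.
    apply: deriv_scale; rewrite (Hlen _ H); exact: (proj1 (Hd p1 x (Hterm _ H))).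
  + rewrite /tr; apply: (deriv_sum (F := fun p1 y => Cmul (Tm p2 p1) (F' p1 y))) => p1 _.
    case: (classic (Tm p2 p1 = C0)) => [E|H].
      rewrite E Cmul0l.
      have -> : (fun y => Cmul C0 (F' p1 y)) = fun _ => C0.
        by apply: functional_extensionality => y; rewrite Cmul0l.
      exact: deriv_const0.
    apply: deriv_scale; rewrite (Hlen _ H); exact: (proj1 (proj2 (Hd p1 x (Hterm _ H)))).
  + rewrite /tr Copp_m1 CmulA Csum_distrr; apply: eq_Csum => p1 _.
    case: (classic (Tm p2 p1 = C0)) => [->|H]; first by rewrite !Cmul0l Cmul0r.
    rewrite (proj2 (proj2 (Hd p1 x (Hterm _ H)))) Copp_m1 /Cm1; Cring.
- move=> k2; rewrite bval_tr dval_tr; apply/(lemA Hc2) => w.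
  have -> : U (tr Tm (bval F)) w = U (bval (G:=quot_graph c1) F) w.
    by apply: functional_extensionality => e; apply: functional_extensionality => s; rewrite TI.
  have -> : U (tr Tm (dval F')) w = U (dval (G:=quot_graph c1) F') w.
    by apply: functional_extensionality => e; apply: functional_extensionality => s; rewrite TI.
  exact: allv.
Qed.

End Two.

Lemma tr_tr (c1 c2 : recipe_choice G K d) (Hc1 : valid_choice aV aE rho c1)
  (Hc2 : valid_choice aV aE rho c2) (X : Type) (a : qedge c2 -> X -> Defs.C) p t :
  tr (Tm (c1:=c1) (c2:=c2)) (tr (Tm (c1:=c2) (c2:=c1)) a) p t = a p t.
Proof.
apply: (U_inj Hc2) => w e s.
by rewrite (TI Hc1 Hc2) (TI Hc2 Hc1).
Qed.

End Act.

Theorem proposition2 (G : qgraph) (K : finGroupType)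
    (aV : K -> qV G -> qV G) (aE : K -> qE G -> qE G)
    (d : nat) (rho : K -> mat d)
    (c1 c2 : recipe_choice G K d) :
  is_qaction aV aE ->
  no_adjacent_map aV ->
  is_rep rho ->
  valid_choice aV aE rho c1 ->
  valid_choice aV aE rho c2 ->
  transplantable (quot_graph c1) (quot_graph c2).
Proof.
move=> Hact _ Hrep Hc1 Hc2.
exists (Tm rho (c1:=c1) (c2:=c2)); split.
  move=> p2 p1 Hl; apply: NNPP => H; apply: Hl.
  by rewrite /= (Tm_len Hact Hc2 H).
move=> lam; split; [|split].
- exact: (Phi12 Hact Hrep Hc1 Hc2).
- move=> F1 F2 HF1 HF2 Hfeq p1 x Hx.
  rewrite -(tr_tr Hact Hrep Hc2 Hc1 F1) -(tr_tr Hact Hrep Hc2 Hc1 F2).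
  rewrite /tr; apply: eq_Csum => p2 _.
  case: (classic (Tm rho (c1:=c2) (c2:=c1) p1 p2 = C0)) => [->|H]; first by rewrite !Cmul0l.
  congr Cmul; apply: Hfeq.
  by move: Hx; rewrite /in_edge /= (Tm_len Hact Hc1 H).
- move=> P HP; exists (tr (Tm rho (c1:=c2) (c2:=c1)) P); split.
    exact: (Phi12 Hact Hrep Hc2 Hc1).
  move=> p2 x _; exact: (tr_tr Hact Hrep Hc1 Hc2).
Qed.
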